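(* Let $n\geq 1$ be an integer. The cyclic subgroup commutativity degree of the dicyclic group $Dic_{4n}$ is $$csd(Dic_{4n})=\begin{cases}\dfrac{\tau(2n)(\tau(2n)+n)+n(\tau(2n)+1)}{(\tau(2n)+n)^2}, & \text{if } n\equiv 1 \pmod 2,\\[2ex] \dfrac{\tau(2n)(\tau(2n)+n)+n(\tau(2n)+2)}{(\tau(2n)+n)^2}, & \text{if } n\equiv 0 \pmod 2.\end{cases}$$
   Context: For a finite group $G$, $L_1(G)$ denotes the set of cyclic subgroups of $G$, and the cyclic subgroup commutativity degree is $csd(G)=\frac{1}{|L_1(G)|^2}|\{(H,K)\in L_1(G)^2: HK=KH\}|$. $\tau(k)$ is the number of positive divisors of $k$. The dicyclic group is $Dic_{4n}=\langle a,\gamma\mid a^{2n}=e,\ \gamma^2=a^n,\ \gamma^{-1}a\gamma=a^{-1}\rangle$. *)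

(* Defs.v *)
From HB Require Import structures.
From mathcomp Require Import all_boot all_order all_algebra all_fingroup.
Set Implicit Arguments. Unset Strict Implicit. Unset Printing Implicit Defensive.
Import GRing.Theory Num.Theory.

Open Scope group_scope.

Definition cyclic_subgroups (gT : finGroupType) (G : {set gT}) : {set {set gT}} :=
  [set <[x]> | x in G].

Definition csd_count (gT : finGroupType) (G : {set gT}) : nat :=
  #|[set HK : {set gT} * {set gT} |
      [&& HK.1 \in cyclic_subgroups G, HK.2 \in cyclic_subgroups G
        & HK.1 * HK.2 == HK.2 * HK.1]]|.

Definition csd (gT : finGroupType) (G : {set gT}) : rat :=
  ((csd_count G)%:R / (#|cyclic_subgroups G| ^ 2)%:R)%R.

Definition tau (k : nat) : nat := size (divisors k).

(* G is (isomorphic to) the dicyclic group Dic_{4n} = <a, g | a^{2n}=1, g^2=a^n, g^-1 a g = a^-1>: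
   G is generated by a, g satisfying the defining relations and has order 4n
   (hence G is the full presented group, not a proper quotient). *)
Definition is_dicyclic (gT : finGroupType) (G : {group gT}) (n : nat) (a g : gT) : Prop :=
  [/\ <<[set a; g]>> = G, a ^+ (2 * n) = 1, g ^+ 2 = a ^+ n,
      g^-1 * a * g = a^-1 & #|G| = (4 * n)%N].

(* Main.v *)
Require Import Defs.
From HB Require Import structures.
From mathcomp Require Import all_boot all_order all_algebra all_fingroup all_solvable.
From mathcomp Require Import zify ring.
Open Scope group_scope.

Close Scope group_scope.
Lemma cardU0 (T : finType) (A B : {set T}) :
  (forall x, x \in A -> x \notin B) -> #|A :|: B| = #|A| + #|B|.
Proof.
move=> h; rewrite cardsU (_ : A :&: B = set0) ?cards0 ?subn0 //.
apply/setP=> x; rewrite !inE; by case: (boolP (x \in A)) => //= /h /negbTE ->.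
Qed.

Definition condP (n : nat) (i j : nat) : bool :=
  (i == j) || (2 * i == 2 * j + n) || (2 * j == 2 * i + n).

Lemma cardP n : 0 < n ->
  #|[set ij : 'I_n * 'I_n | condP n ij.1 ij.2]| = if odd n then n else 2 * n.
Proof.
case: n => [//|m] _.
have hn := odd_double_half m.+1.
case: ifP => hodd.
  rewrite hodd in hn.
  have -> : [set ij : 'I_m.+1 * 'I_m.+1 | condP m.+1 ij.1 ij.2] =
            [set (i, i) | i in 'I_m.+1].
    apply/setP=> [[i j]]; rewrite inE /condP /=; apply/idP/imsetP.
      move=> c; exists i => //; congr pair; apply/val_inj => /=.
      move: c; set k := m.+1./2; rewrite -/(nat_of_ord i) -/(nat_of_ord j) in hn *; lia.
    by case=> x _ [-> ->]; rewrite eqxx.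
  by rewrite card_imset ?card_ord // => x y [].
rewrite hodd add0n in hn.
set k := m.+1./2 in hn.
have k0 : 0 < k by lia.
pose sh (i : 'I_m.+1) : 'I_m.+1 := inord (if i < k then i + k else i - k).
have shv (i : 'I_m.+1) : sh i = (if i < k then i + k else i - k) :> nat.
  rewrite inordK //; have := ltn_ord i; case: ifP; lia.
have -> : [set ij : 'I_m.+1 * 'I_m.+1 | condP m.+1 ij.1 ij.2] =
          [set (i, i) | i in 'I_m.+1] :|: [set (i, sh i) | i in 'I_m.+1].
  apply/setP=> [[i j]]; rewrite !inE /condP /=; apply/idP/orP.
    move=> c.
    case: (eqVneq i j) => [->|ij]; first by left; apply: imset_f.
    right; apply/imsetP; exists i => //; congr pair; apply/val_inj.
    rewrite /= shv; move: ij c; rewrite -val_eqE /=.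
    have := ltn_ord i; have := ltn_ord j; case: ifP; lia.
  case=> /imsetP[x _ [-> ->]]; first by rewrite eqxx.
  rewrite shv; have := ltn_ord x; case: ifP; lia.
rewrite cardU0.
  rewrite !card_imset ?card_ord; first lia.
    by move=> x y [] ->.
  by move=> x y [].
move=> p /imsetP[x _ ->]; apply/imsetP=> [[y _ [e1 e2]]].
have := shv y; rewrite -e2 -e1; have := ltn_ord x; case: ifP; lia.
Qed.

Open Scope group_scope.
Lemma struct1 (gT : finGroupType) (G : {group gT}) (n : nat) (a g : gT) :
  (1 <= n)%N -> is_dicyclic G n a g ->
  [/\ #[a] = (2 * n)%N, g \notin <[a]> & (G :==: <[a]> :|: <[a]> :* g)].
Proof.
move=> n1 [genG a2n g2 gag cardG].
have aG : a \in G by rewrite -genG mem_gen // !inE eqxx.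
have gG : g \in G by rewrite -genG mem_gen // !inE eqxx orbT.
have ag : a ^ g = a^-1 by rewrite /conjg mulgA.
have nAg : g \in 'N(<[a]>).
  by apply/normP; rewrite -cycleJ ag cycleV.
have sub1 : G \subset <[a]> :|: <[a]> :* g.
  have : G \subset <[a]> * <[g]>.
    have gp : group_set (<[a]> * <[g]>).
      apply/comm_group_setP; apply/esym/normC; by rewrite cycle_subG.
    rewrite -genG (_ : <[a]> * <[g]> = Group gp) // gen_subG.
    apply/subsetP=> x; rewrite !inE => /orP[]/eqP->.
      by have := mem_mulg (cycle_id a) (group1 <[g]>); rewrite mulg1.
    by have := mem_mulg (group1 <[a]>) (cycle_id g); rewrite mul1g.
  move/subset_trans; apply; apply/subsetP=> x /mulsgP[y z yA /cycleP[k ->] ->].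
  rewrite (divn_eq k 2) expgD mulnC expgM g2 -expgM.
  have yk : y * a ^+ (n * (k %/ 2)) \in <[a]>.
    by rewrite groupM // mem_cycle.
  rewrite inE mulgA; case: (k %% 2) (ltn_pmod k (isT : 0 < 2)%N) => [|[|//]] _.
    by rewrite expg0 mulg1 yk.
  by rewrite expg1 mem_rcoset mulgK yk orbT.
have sub2 : <[a]> :|: <[a]> :* g \subset G.
  rewrite subUset cycle_subG aG /=; apply/subsetP=> x /rcosetP[y yA ->].
  by rewrite groupM // (subsetP _ _ yA) // cycle_subG.
have oa : (#[a] <= 2 * n)%N.
  apply: dvdn_leq; first by lia.
  by rewrite order_dvdn a2n.
have cU := subset_leq_card sub1.
rewrite cardG cardsU card_rcoset in cU.
have oa' : #[a] = (2 * n)%N.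
  apply/eqP; rewrite eqn_leq oa /=; move: cU oa; rewrite /order; set m := #|<[a]>|; set k := #|_ :&: _|. lia.
have gA : g \notin <[a]>.
  apply/negP=> gA; move: (subset_leq_card sub1); rewrite (rcoset_id gA) setUid cardG.
  by move: oa; rewrite /order; set m := #|<[a]>|; lia.
split=> //; rewrite eqEsubset sub1 sub2 //.
Qed.

Lemma mod3 (m u : nat) : (0 < m)%N -> (u < 3 * m)%N ->
  [\/ u < m /\ u %% m = u, m <= u < 2 * m /\ u %% m = u - m
    | 2 * m <= u /\ u %% m = u - 2 * m]%N.
Proof.
move=> m0 um.
case: (ltnP u m) => h1; first by apply: Or31; rewrite modn_small.
case: (ltnP u (2 * m)) => h2.
  apply: Or32; split; first lia.
  by rewrite -{1}(subnK h1) modnDr modn_small //; lia.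
apply: Or33; split=> //.
have -> : u = (u - 2 * m) + m + m by lia.
by rewrite !modnDr modn_small; lia.
Qed.

Section Dic.
Variables (gT : finGroupType) (G : {group gT}) (n : nat) (a g : gT).
Hypotheses (n1 : (0 < n)%N) (genG : <<[set a; g]>> = G) (oa : #[a] = (2 * n)%N)
  (gA : g \notin <[a]>) (g2 : g ^+ 2 = a ^+ n) (ag : a ^ g = a^-1).

Lemma a2n : a ^+ (2 * n) = 1.
Proof. by rewrite -oa expg_order. Qed.

Lemma eqa u v : (u < 3 * (2 * n))%N -> (v < 3 * (2 * n))%N ->
  (a ^+ u = a ^+ v) -> (u = v \/ u = v + 2 * n \/ v = u + 2 * n \/ u = v + 4 * n \/ v = u + 4 * n)%N.
Proof.
move=> hu hv /eqP; rewrite eq_expg_mod_order oa => /eqnP.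
have m0 : (0 < 2 * n)%N by lia.
case: (@mod3 _ _ m0 hu) => [[h1 ->]|[h1 ->]|[h1 ->]];
   case: (@mod3 _ _ m0 hv) => [[h2 ->]|[h2 ->]|[h2 ->]]; lia.
Qed.

Lemma ga k : g * a ^+ k = a ^- k * g.
Proof. by rewrite [RHS]conjgC conjVg conjXg ag expgVn invgK. Qed.

Lemma an_g : a ^+ n * g = g * a ^+ n.
Proof.
rewrite ga; congr (_ * _).
apply: (mulgI (a ^+ n)); rewrite mulgV -expgD addnn -mul2n a2n //.
Qed.

Lemma prodgg u v : (v <= u + 3 * n)%N -> (a ^+ u * g) * (a ^+ v * g) = a ^+ (u + 3 * n - v).
Proof.
move=> vu.
have e1 : a ^+ u * g * (a ^+ v * g) = a ^+ u * a ^- v * a ^+ n.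
  by rewrite mulgA -(mulgA _ g) ga !mulgA -(mulgA _ g g) -expg2 g2.
rewrite e1 (commuteV (commuteX2 u v (commute_refl a))).
have e2 : a ^+ u * a ^+ n = a ^+ v * a ^+ (u + 3 * n - v).
  rewrite -!expgD subnKC // -(mulg1 (a ^+ (u + n))) -a2n -expgD; congr (_ ^+ _); lia.
by rewrite -mulgA e2 mulKg.
Qed.


Lemma aeq U V : (U = V + 2 * n \/ V = U + 2 * n \/ U = V)%N -> a ^+ U = a ^+ V.
Proof.
by case=> [->|[->|->]] //; rewrite expgD a2n mulg1.
Qed.

Lemma xsq k : (a ^+ k * g) ^+ 2 = a ^+ n.
Proof.
rewrite expg2 prodgg; last by lia.
by apply: aeq; lia.
Qed.

Lemma x3 k : (a ^+ k * g) ^+ 3 = a ^+ (n + k) * g.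
Proof. by rewrite expgSr xsq mulgA -expgD. Qed.

Lemma x4 k : (a ^+ k * g) ^+ 4 = 1.
Proof. by rewrite (_ : 4 = 2 * 2)%N // expgM xsq -expgM mulnC a2n. Qed.

Lemma memX k u : u \in <[a ^+ k * g]> ->
  [\/ u = a ^+ 0, u = a ^+ n, u = a ^+ k * g | u = a ^+ (n + k) * g].
Proof.
case/cycleP=> i ->; rewrite -(expg_mod i (x4 k)).
case: (i %% 4) (ltn_pmod i (isT : 0 < 4)%N) => [|[|[|[|//]]]] _.
- by apply: Or41.
- by apply: Or43; rewrite expg1.
- by apply: Or42; rewrite xsq.
- by apply: Or44; rewrite x3.
Qed.

Lemma xnotA e : a ^+ e * g \notin <[a]>.
Proof. by rewrite groupMl ?mem_cycle. Qed.

Lemma cyc_shift k : <[a ^+ (n + k) * g]> = <[a ^+ k * g]>.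
Proof.
apply/eqP; rewrite eqEsubset !cycle_subG; apply/andP; split.
  by rewrite -x3 mem_cycle.
have -> : a ^+ k * g = (a ^+ (n + k) * g) ^+ 3.
  by rewrite x3; congr (_ * _); apply: aeq; lia.
by rewrite mem_cycle.
Qed.

Lemma cyc_mod k : <[a ^+ k * g]> = <[a ^+ (k %% n) * g]>.
Proof.
rewrite {1}(divn_eq k n); elim: (k %/ n) => [|q IH]; first by rewrite mul0n add0n.
by rewrite mulSn -addnA cyc_shift.
Qed.

Lemma eq_cyc i j : (i < n)%N -> (j < n)%N -> <[a ^+ i * g]> = <[a ^+ j * g]> -> i = j.
Proof.
move=> ilt jlt E.
have := cycle_id (a ^+ j * g); rewrite -E => /memX[] E2.
- by have := xnotA j; rewrite E2 mem_cycle.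
- by have := xnotA j; rewrite E2 mem_cycle.
- by move/mulIg: E2 => /eqa; lia.
- by move/mulIg: E2 => /eqa; lia.
Qed.

Lemma memA_eq x y : x * y \in <[a]> -> (x \in <[a]>) = (y \in <[a]>).
Proof.
move=> xy; case: (boolP (x \in <[a]>)) => xA; first by rewrite -(groupMl _ xA).
apply/esym/negbTE; apply: contra xA => yA; by rewrite -(groupMr _ yA).
Qed.

Lemma commT i j : (i < n)%N -> (j < n)%N ->
  (<[a ^+ i * g]> * <[a ^+ j * g]> = <[a ^+ j * g]> * <[a ^+ i * g]>) <->
  (i = j \/ 2 * i = 2 * j + n \/ 2 * j = 2 * i + n)%N.
Proof.
move=> ilt jlt; split.
  move=> E.
  have := mem_mulg (cycle_id (a ^+ i * g)) (cycle_id (a ^+ j * g)).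
  rewrite E prodgg; last by lia.
  case/mulsgP=> k h kK hH e.
  have eA : k * h \in <[a]> by rewrite -e mem_cycle.
  move: (memA_eq _ _ eA) => kh.
  case/memX: kK e kh => ->; case/memX: hH => -> e kh;
    rewrite ?mem_cycle ?(negbTE (xnotA _)) // in kh.
  - by move: e; rewrite -expgD => /eqa; lia.
  - by move: e; rewrite -expgD => /eqa; lia.
  - by move: e; rewrite -expgD => /eqa; lia.
  - by move: e; rewrite -expgD => /eqa; lia.
  - by move: e; rewrite prodgg; [move/eqa; lia | lia].
  - by move: e; rewrite prodgg; [move/eqa; lia | lia].
  - by move: e; rewrite prodgg; [move/eqa; lia | lia].
  - by move: e; rewrite prodgg; [move/eqa; lia | lia].
case=> [->//|cnd].
have xy : (a ^+ i * g) * (a ^+ j * g) = (a ^+ j * g) * (a ^+ (n + i) * g).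
  rewrite !prodgg; try lia.
  by apply: aeq; lia.
have xJ : (a ^+ i * g) ^ (a ^+ j * g) = a ^+ (n + i) * g.
  by rewrite conjgE xy mulKg.
apply/esym/normC; rewrite cycle_subG; apply/normP.
by rewrite -cycleJ xJ cyc_shift.
Qed.

Lemma normS1 u : u \in <[a]> -> G \subset 'N(<[u]>).
Proof.
case/cycleP=> k ->; rewrite -genG gen_subG; apply/subsetP=> x.
move=> /set2P[]->; apply/normP; rewrite -cycleJ conjXg.
  by rewrite conjgE mulKg.
by rewrite ag expgVn cycleV.
Qed.


Hypothesis GE : (G :==: <[a]> :|: <[a]> :* g).

Lemma divdiv m d : (0 < m)%N -> (d %| m)%N -> (m %/ (m %/ d))%N = d.
Proof.
move=> m0 dm; rewrite divnA // mulnC mulnK //.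
Qed.

Lemma card_f d : (d \in divisors (2 * n))%N -> #|<[a ^+ ((2 * n) %/ d)]>| = d.
Proof.
rewrite -dvdn_divisors; last by lia.
move=> dd; rewrite -/(order _) orderXdiv oa ?dvdn_div // divdiv //; lia.
Qed.

Lemma cardS1 : #|[set <[x]> | x in <[a]>]| = tau (2 * n).
Proof.
pose f d := <[a ^+ ((2 * n) %/ d)]>.
have E : [set <[x]> | x in <[a]>] = [set X in map f (divisors (2 * n))].
  apply/setP=> X; rewrite inE; apply/imsetP/mapP.
    case=> x xA ->; exists #[x].
      rewrite -dvdn_divisors; last by lia.
      by rewrite -oa; apply: cardSg; rewrite cycle_subG.
    apply/eqP; rewrite (eq_subG_cyclic (cycle_cyclic a)) ?cycle_subG ?mem_cycle //.
    rewrite card_f //.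
    rewrite -dvdn_divisors; last by lia.
    by rewrite -oa; apply: cardSg; rewrite cycle_subG.
  by case=> d dD ->; exists (a ^+ ((2 * n) %/ d)); rewrite ?mem_cycle.
have U : uniq (map f (divisors (2 * n))).
  rewrite map_inj_in_uniq ?divisors_uniq // => d1 d2 h1 h2 e.
  by have := congr1 (fun X : {set gT} => #|X|) e; rewrite /f /= !card_f.
by rewrite E cardsE (card_uniqP U) size_map.
Qed.

Lemma aG : a \in G.
Proof. by rewrite -genG mem_gen // !inE eqxx. Qed.
Lemma gG : g \in G.
Proof. by rewrite -genG mem_gen // !inE eqxx orbT. Qed.

Definition S1 := [set <[x]> | x in <[a]>].
Definition hh (i : 'I_n) := <[a ^+ i * g]>.
Definition TT := [set hh i | i in [set: 'I_n]].
Definition PP := [set ij : 'I_n * 'I_n | condP n ij.1 ij.2].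

Lemma hh_inj : injective hh.
Proof. by move=> i j /(eq_cyc _ _ (ltn_ord i) (ltn_ord j)) /val_inj. Qed.

Lemma L1E : cyclic_subgroups G = S1 :|: TT.
Proof.
rewrite /cyclic_subgroups (eqP GE) imsetU; congr (_ :|: _); apply/setP=> X.
apply/imsetP/imsetP.
  case=> x /rcosetP[y /cycleP[k ->] ->] ->.
  by exists (Ordinal (ltn_pmod k n1)) => //; rewrite /hh /= -cyc_mod.
by case=> i _ ->; exists (a ^+ i * g) => //; rewrite mem_rcoset mulgK mem_cycle.
Qed.

Lemma cardT : #|TT| = n.
Proof. by rewrite card_imset ?cardsT ?card_ord //; apply: hh_inj. Qed.

Lemma disjS1T X : X \in S1 -> X \notin TT.
Proof.
case/imsetP=> x xA ->; apply/negP; case/imsetP=> i _ e.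
have := xnotA i; rewrite -cycle_subG; apply/negP/negPn.
have : a ^+ i * g \in <[x]> by rewrite e cycle_id.
by move/(subsetP _)=> h; rewrite cycle_subG h // cycle_subG.
Qed.

Lemma subL X : X \in S1 :|: TT -> X \subset G.
Proof.
have AG : <[a]> \subset G by rewrite cycle_subG aG.
case/setUP=> /imsetP[x xA ->]; rewrite cycle_subG.
  exact: (subsetP AG).
by rewrite groupM ?gG // (subsetP AG) ?mem_cycle.
Qed.

Lemma commS1 (X Y : {set gT}) : X \in S1 -> Y \subset G -> X * Y = Y * X.
Proof.
case/imsetP=> u uA -> YG; apply/esym/normC.
exact: subset_trans YG (normS1 _ uA).
Qed.

Lemma condPE i j : condP n i j <-> (i = j \/ 2 * i = 2 * j + n \/ 2 * j = 2 * i + n)%N.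
Proof. rewrite /condP; split; lia. Qed.

Lemma countE : csd_count G = (#|S1| * #|S1 :|: TT| + (#|TT| * #|S1| + #|PP|))%N.
Proof.
rewrite /csd_count L1E.
have -> : [set HK : {set gT} * {set gT} | [&& HK.1 \in S1 :|: TT, HK.2 \in S1 :|: TT
        & HK.1 * HK.2 == HK.2 * HK.1]] =
   setX S1 (S1 :|: TT) :|: (setX TT S1 :|: [set (hh ij.1, hh ij.2) | ij in PP]).
  apply/setP=> [[H K]]; rewrite !inE /=; apply/idP/idP.
    case/and3P=> hL kL /eqP cm.
    case: (boolP (H \in S1)) => hS; first by rewrite kL.
    have hT : H \in TT by move: hL; rewrite (negbTE hS).
    case: (boolP (K \in S1)) => kS; first by rewrite hT.
    have kT : K \in TT by move: kL; rewrite (negbTE kS).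
    apply/orP; right; apply/orP; right.
    case/imsetP: hT => i _ eH; case/imsetP: kT => j _ eK.
    apply/imsetP; exists (i, j); last by rewrite eH eK.
    rewrite inE /=; apply/condPE/commT => //; rewrite -/(hh i) -/(hh j) -eH -eK //.
  case/orP=> [/andP[hS kL] | /orP[/andP[hT kS] | /imsetP[[i j] ij [-> ->]]]].
  - rewrite hS kL /=; apply/eqP; apply: commS1 => //; by apply: subL; rewrite inE.
  - rewrite hT kS orbT /=; apply/eqP/esym; apply: commS1 => //.
    by apply: subL; rewrite inE hT orbT.
  - rewrite /TT !imset_f ?inE ?orbT //=; apply/eqP.
    by move: ij; rewrite inE /= => /condPE /commT; apply.
rewrite (@cardU0 _ (setX S1 (S1 :|: TT))); last first.
  move=> [H K]; rewrite !inE /= => /andP[hS _]; apply/negP=> /orP[/andP[hT _]|].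
    by move: (disjS1T _ hS); rewrite hT.
  case/imsetP=> ij _ [eH _]; move: (disjS1T _ hS); rewrite eH imset_f //.
rewrite (@cardU0 _ (setX TT S1)); last first.
  move=> [H K]; rewrite !inE /= => /andP[_ kS]; apply/negP.
  case/imsetP=> ij _ [_ eK]; move: (disjS1T _ kS); rewrite eK imset_f //.
rewrite !cardsX card_imset //.
by move=> [i j] [i' j'] [] /hh_inj -> /hh_inj ->.
Qed.

End Dic.

Import GRing.Theory.

Theorem theorem3p1 (gT : finGroupType) (G : {group gT}) (n : nat) (a g : gT) :
  (1 <= n)%N -> is_dicyclic G n a g ->
  csd G =
  (if odd n then
     (((tau (2 * n))%:R * ((tau (2 * n))%:R + n%:R) + n%:R * ((tau (2 * n))%:R + 1))
       / ((tau (2 * n))%:R + n%:R) ^+ 2)%R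
   else
     (((tau (2 * n))%:R * ((tau (2 * n))%:R + n%:R) + n%:R * ((tau (2 * n))%:R + 2))
       / ((tau (2 * n))%:R + n%:R) ^+ 2)%R).
Proof.
move=> n1 D; have [oa gA GE] := @struct1 gT G n a g n1 D.
case: D => genG _ g2 gag _.
have ag : a ^ g = a^-1 by rewrite /conjg mulgA.
have C := @countE gT G n a g.
have L := @L1E gT G n a g.
have cS := @cardS1 gT G n a g.
have cT := @cardT gT n a g.
have dj := @disjS1T gT n a g.
rewrite /csd C // L // cardU0; last by move=> X; apply: dj.
rewrite cS // cT // cardP //.
case: (odd n); rewrite !(natrD, natrM, natrX); congr (_ / _)%R; ring.
Qed.
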